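(* Let $T$ be a Fano tetrahedron in $\mathbb{Z}^3$ with vertices $x_1=(1,0,0)$, $x_2=(0,1,0)$, $x_3=(k''\lambda_4-a\lambda_1,\ k'\lambda_4-a\lambda_2,\ k\lambda_4)$, $x_4=(-k''\lambda_3-b\lambda_1,\ -k'\lambda_3-b\lambda_2,\ -k\lambda_3)$, where $\lambda_1\le\cdots\le\lambda_4$ are non-negative integers with $\gcd(\lambda_1,\ldots,\lambda_4)=1$ and $\sum_i\lambda_ix_i=0$, $a,b\in\mathbb{Z}$ with $a>0$ and $a\lambda_3+b\lambda_4=1$, and $k,k',k''\in\mathbb{N}$ with $0\le k''\lambda_4-a\lambda_1<k\lambda_4$ and $0\le k'\lambda_4-a\lambda_2<k\lambda_4$. Then $$0\le k\lambda_3-k''\lambda_3-b\lambda_1<k\lambda_3\quad\text{and}\quad 0\le k\lambda_3-k'\lambda_3-b\lambda_2<k\lambda_3,$$ and one of these lower inequalities is an equality only if $\lambda_3=1$; in that case $T$ is equivalent under $GL(3,\mathbb{Z})$ either to the tetrahedron with vertices $e_1,e_2,e_3,-e_1-e_2-e_3$ or to the tetrahedron with vertices $(1,0,0),(0,1,0),(1,1,2),(-1,-1,-1)$.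
   Context: A tetrahedron is called Fano if its vertices lie in $\mathbb{Z}^3$ and the only lattice point it contains other than its vertices is the origin, which lies strictly in its interior. $e_1,e_2,e_3$ is the standard basis of $\mathbb{Z}^3$. *)

(* Defs.v *)
From HB Require Import structures.
From mathcomp Require Import all_boot all_order all_algebra all_fingroup.
Set Implicit Arguments. Unset Strict Implicit. Unset Printing Implicit Defensive.
Import Order.TTheory GRing.Theory Num.Theory.
Local Open Scope ring_scope.

Definition vec3 := 'cV[int]_3.

Definition mkv (a b c : int) : vec3 := \col_(i < 3) nth 0 [:: a; b; c] i.

Definition tet (x1 x2 x3 x4 : vec3) : 'I_4 -> vec3 :=
  fun i => nth 0 [:: x1; x2; x3; x4] i.

Definition toQ (v : vec3) : 'cV[rat]_3 := map_mx (fun z : int => z%:~R) v.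

Definition in_conv (V : 'I_4 -> vec3) (p : 'cV[rat]_3) : Prop :=
  exists t : 'I_4 -> rat,
    (forall i, 0 <= t i) /\ \sum_i t i = 1 /\ \sum_i t i *: toQ (V i) = p.

Definition nondegenerate (V : 'I_4 -> vec3) : Prop :=
  \det (\matrix_(i < 3, j < 3) (V (lift ord0 j) i ord0 - V ord0 i ord0)) != 0.

Definition in_interior (V : 'I_4 -> vec3) (p : 'cV[rat]_3) : Prop :=
  nondegenerate V /\
  exists t : 'I_4 -> rat,
    (forall i, 0 < t i) /\ \sum_i t i = 1 /\ \sum_i t i *: toQ (V i) = p.

Definition fano (V : 'I_4 -> vec3) : Prop :=
  in_interior V 0 /\
  forall p : vec3, in_conv V (toQ p) -> p = 0 \/ exists i, p = V i.

Definition GL3Z_equiv (V W : 'I_4 -> vec3) : Prop :=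
  exists M : 'M[int]_3, (\det M = 1 \/ \det M = -1) /\
  exists s : {perm 'I_4}, forall i, M *m V i = W (s i).

(* Main.v *)
Require Import Defs.
From HB Require Import structures.
From mathcomp Require Import all_boot all_order all_algebra all_fingroup.
From mathcomp Require Import zify ring lra.
Import Order.TTheory GRing.Theory Num.Theory.
Local Open Scope ring_scope.
Lemma sum_comp (V : 'I_4 -> vec3) (t : 'I_4 -> rat) (j : 'I_3) :
  (\sum_i t i *: toQ (V i)) j 0 = \sum_i t i * (V i j 0)%:~R.
Proof. rewrite summxE; apply: eq_bigr => i _; by rewrite !mxE. Qed.

Lemma mkvE a b c (j : 'I_3) : mkv a b c j 0 = nth 0 [:: a; b; c] j.
Proof. by rewrite mxE. Qed.

Lemma conv_comb (V : 'I_4 -> vec3) (mu : 'I_4 -> rat) (al be : rat) (m1 m2 : 'I_4) (p : vec3) :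
  (forall i, 0 <= mu i) -> \sum_i mu i = 1 -> \sum_i mu i *: toQ (V i) = 0 ->
  0 <= al -> 0 <= be -> al + be <= 1 ->
  toQ p = al *: toQ (V m1) + be *: toQ (V m2) -> in_conv V (toQ p).
Proof.
move=> mu0 mu1 muV al0 be0 albe ->.
have h1 : forall (F : 'I_4 -> 'cV[rat]_3) (m : 'I_4) (x : rat),
   \sum_i (if i == m then x else 0) *: F i = x *: F m.
  move=> F m x; rewrite (bigD1 m) //= eqxx big1 ?addr0 // => i /negbTE ->.
  by rewrite scale0r.
have h2 : forall (m : 'I_4) (x : rat), \sum_(i < 4) (if i == m then x else 0) = x.
  move=> m x; rewrite (bigD1 m) //= eqxx big1 ?addr0 // => i /negbTE -> //.
exists (fun i => (1 - al - be) * mu i + (if i == m1 then al else 0)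
                 + (if i == m2 then be else 0)).
split; [move=> i| split].
- apply: addr_ge0; [apply: addr_ge0|]; last by case: eqP.
  + apply: mulr_ge0 => //; lra.
  + by case: eqP.
- rewrite !big_split /= -mulr_sumr mu1 mulr1 !h2; ring.
- under eq_bigr do rewrite !scalerDl -scalerA.
  by rewrite !big_split /= -scaler_sumr muV scaler0 add0r !h1.
Qed.

Lemma conv_pt (V : 'I_4 -> vec3) (s : 'I_4 -> rat) (p : vec3) :
  (forall i, 0 <= s i) -> \sum_i s i = 1 ->
  (forall j : 'I_3, \sum_i s i * (V i j 0)%:~R = (p j 0)%:~R) -> in_conv V (toQ p).
Proof.
move=> s0 s1 sj; exists s; split => //; split => //.
apply/matrixP => j z; rewrite (ord1 z) sum_comp sj; by rewrite !mxE.
Qed.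
Lemma core (l1 l2 l3 l4 a b k k' k'' c c' d d' : int) :
  let x1 := mkv 1 0 0 in
  let x2 := mkv 0 1 0 in
  let x3 := mkv c c' (k * l4) in
  let x4 := mkv d d' (- (k * l3)) in
  fano (tet x1 x2 x3 x4) ->
  c = k'' * l4 - a * l1 -> c' = k' * l4 - a * l2 -> d = -(k'' * l3) - b * l1 -> d' = -(k' * l3) - b * l2 ->
  0 <= l1 -> l1 <= l2 -> l2 <= l3 -> l3 <= l4 -> a * l3 + b * l4 = 1 -> 0 <= k ->
  0 <= c < k * l4 -> 0 <= c' < k * l4 ->
  [/\ 0 <= k * l3 + d < k * l3, 0 <= k * l3 + d' < k * l3 &
      (k * l3 + d = 0 \/ k * l3 + d' = 0) -> l3 = 1 /\
      (GL3Z_equiv (tet x1 x2 x3 x4)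
         (tet (mkv 1 0 0) (mkv 0 1 0) (mkv 0 0 1) (mkv (-1) (-1) (-1))) \/
       GL3Z_equiv (tet x1 x2 x3 x4)
         (tet (mkv 1 0 0) (mkv 0 1 0) (mkv 1 1 2) (mkv (-1) (-1) (-1))))].
Proof.
move=> x1 x2 x3 x4 [[_ [t [tpos [tsum teq]]]] hlat] Hc Hc' Hd Hd'
  hl1 hl12 hl23 hl34 hab hk /andP[hc0 hc1] /andP[hc'0 hc'1].
have E := fun j : 'I_3 => congr1 (fun M : 'cV[rat]_3 => M j 0) teq.
have E1 := E 0. have E2 := E 1. have E3 := E 2.
rewrite /= sum_comp !big_ord_recl big_ord0 /= !mxE /= in E1.
rewrite /= sum_comp !big_ord_recl big_ord0 /= !mxE /= in E2.
rewrite /= sum_comp !big_ord_recl big_ord0 /= !mxE /= in E3.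
rewrite !big_ord_recl big_ord0 /= in tsum.
have hT0 := tpos ord0. have hT2 := tpos (lift ord0 (lift ord0 ord0)).
set T0 := t ord0 in E1 E2 E3 tsum hT0.
set T1 := t (lift ord0 ord0) in E1 E2 E3 tsum.
set T2 := t (lift ord0 (lift ord0 ord0)) in E1 E2 E3 tsum hT2.
set T3 := t (lift ord0 (lift ord0 (lift ord0 ord0)))in E1 E2 E3 tsum.
rewrite ?(rmorph0, rmorph1, intrM, intrN, mulr0, mulr1, addr0, add0r) in E1 E2 E3.
have {}E1 : T0 + T2 * c%:~R + T3 * d%:~R = 0 by rewrite -E1; ring.
have {}E2 : T1 + T2 * c'%:~R + T3 * d'%:~R = 0 by rewrite -E2; ring.
have {}E3 : T2 * (k%:~R * l4%:~R) + T3 * (-(k%:~R * l3%:~R)) = 0 by rewrite -E3; ring.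
have I1 : l1 + l3 * c + l4 * d = 0.
  rewrite Hc Hd; transitivity (l1 * (1 - (a * l3 + b * l4))); first ring.
  by rewrite hab subrr mulr0.
have I2 : l2 + l3 * c' + l4 * d' = 0.
  rewrite Hc' Hd'; transitivity (l2 * (1 - (a * l3 + b * l4))); first ring.
  by rewrite hab subrr mulr0.
have hK : 0 < k * l4 by lia.
have hl4 : 0 < l4 by nia.
have hk0 : 0 < k by nia.
have hl1p : 0 < l1.
  rewrite lt_def hl1 andbT; apply/eqP => l10.
  have I1r : (l1%:~R + l3%:~R * c%:~R + l4%:~R * d%:~R : rat) = 0.
    by have := congr1 (fun z : int => z%:~R : rat) I1; rewrite !intrD !intrM rmorph0.
  have H : (k%:~R : rat) * (l3%:~R * T0 - l1%:~R * T2) = 0.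
    transitivity (k%:~R * l3%:~R * (T0 + T2 * c%:~R + T3 * d%:~R)
       + d%:~R * (T2 * (k%:~R * l4%:~R) + T3 * (-(k%:~R * l3%:~R)))
       - k%:~R * T2 * (l1%:~R + l3%:~R * c%:~R + l4%:~R * d%:~R) : rat); first ring.
    by rewrite E1 E3 I1r !mulr0 subr0 addr0.
  have kne0 : k != 0 by rewrite gt_eqF.
  move/eqP: H; rewrite mulf_eq0 intr_eq0 (negbTE kne0) /= l10 rmorph0 mul0r subr0.
  rewrite mulf_eq0 intr_eq0 (gt_eqF hT0) orbF => /eqP l30.
  move: E3; rewrite l30 rmorph0 !(mulr0, oppr0, addr0) => /eqP.
  rewrite mulf_eq0 (gt_eqF hT2) /= -intrM intr_eq0 => /eqP; lia.
have hl2p : 0 < l2 by lia.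
have hl3p : 0 < l3 by lia.
have hn : 0 < k * l3 by nia.
have U1 : l4 * (k * l3 + d) = l3 * (k * l4 - c) - l1 by lia.
have U2 : l4 * (k * l3 + d') = l3 * (k * l4 - c') - l2 by lia.
have B1 : 0 <= k * l3 + d < k * l3.
  have h1 : 0 <= l3 * (k * l4 - c - 1) by apply: mulr_ge0; lia.
  have h2 : 0 <= l3 * c by apply: mulr_ge0; lia.
  apply/andP; split; nia.
have B2 : 0 <= k * l3 + d' < k * l3.
  have h1 : 0 <= l3 * (k * l4 - c' - 1) by apply: mulr_ge0; lia.
  have h2 : 0 <= l3 * c' by apply: mulr_ge0; lia.
  apply/andP; split; nia.
split => // Heq.
have tsum0 : \sum_i t i = 1 by rewrite !big_ord_recl big_ord0.
have key : forall q : vec3, q 2 0 = -1 -> in_conv (tet x1 x2 x3 x4) (toQ q) ->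
    1 < k * l3 -> False.
  move=> q q2 /hlat [q0|[i qi]] hn2.
    by move: q2; rewrite q0 mxE.
  move: q2; rewrite qi; case: i {qi} => [[|[|[|[|i]]]] hi] //=; rewrite mxE /=; lia.
have conv2 : forall (q : vec3) (al be : rat) (m : 'I_4), 0 <= al -> 0 <= be -> al + be <= 1 ->
   toQ q = al *: toQ x4 + be *: toQ (tet x1 x2 x3 x4 m) -> in_conv (tet x1 x2 x3 x4) (toQ q).
  move=> q al be m hal hbe hab1 hq.
  apply: (@conv_comb _ t al be (@Ordinal 4 3 isT) m) => //.
  by move=> i; apply: ltW.
set n := k * l3 in hn U1 U2 B1 B2 Heq key *.
have nr0 : (n%:~R : rat) != 0 by rewrite intr_eq0 gt_eqF.
have nrp : (0 : rat) < n%:~R by rewrite ltr0z.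
have [Hk1 [Hl31 [Hl11 Hl21]]] : k = 1 /\ l3 = 1 /\ l1 = 1 /\ l2 = 1.
  case: Heq => [Hu|Hu'].
  - have hc : k * l4 - c = 1 /\ l1 = l3.
      have h1 : 0 <= l3 * (k * l4 - c - 1) by apply: mulr_ge0; lia.
      rewrite Hu mulr0 in U1.
      have e : l3 * (k * l4 - c - 1) = 0 by lia.
      move/eqP: e; rewrite mulf_eq0 (gt_eqF hl3p) /= => /eqP; lia.
    have hd : d = - n by lia.
    have n1 : n = 1.
      suff : ~ (1 < n) by lia. move=> hn2.
      case: (eqVneq (n + d') 0) => hu'.
      + have hd' : d' = - n by lia.
        apply: (key (mkv (-1) (-1) (-1))) => //; first by rewrite mxE.
        apply: (conv2 _ (n%:~R^-1) 0 (@Ordinal 4 1 isT)) => //.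
        * by rewrite invr_ge0 ltW.
        * by rewrite addr0 invr_le1 // ler1z; lia.
        apply/matrixP => i z; rewrite (ord1 z) /toQ /tet /= !mxE.
        case: i => [[|[|[|i]]] hi] //=; rewrite ?(hd, hd'); try change (k * l3) with n; rewrite ?(intrN, rmorph0, rmorph1); field; exact: nr0.
      + apply: (key (mkv (-1) 0 (-1))) => //; first by rewrite mxE.
        apply: (conv2 _ (n%:~R^-1) (- d'%:~R / n%:~R) (@Ordinal 4 1 isT)) => //.
        * by rewrite invr_ge0 ltW.
        * apply: divr_ge0; last exact: ltW. rewrite -intrN ler0z; lia.
        * have h : ((1 - d')%:~R : rat) <= n%:~R by rewrite ler_int; lia.
          rewrite intrB rmorph1 in h.
          rewrite (_ : _ + _ = (1 - d'%:~R) / n%:~R); last by field.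
          by rewrite ler_pdivrMr // mul1r.
        apply/matrixP => i z; rewrite (ord1 z) /toQ /tet /= !mxE.
        case: i => [[|[|[|i]]] hi] //=; rewrite ?hd; try change (k * l3) with n; rewrite ?(intrN, rmorph0, rmorph1); field; exact: nr0.
    have h : 0 <= k * (l3 - 1) by apply: mulr_ge0; lia.
    have hk1 : k = 1 by move: n1; rewrite /n; lia.
    move: n1; rewrite /n hk1 mul1r => hl31; lia.
  - have hc : k * l4 - c' = 1 /\ l2 = l3.
      have h1 : 0 <= l3 * (k * l4 - c' - 1) by apply: mulr_ge0; lia.
      rewrite Hu' mulr0 in U2.
      have e : l3 * (k * l4 - c' - 1) = 0 by lia.
      move/eqP: e; rewrite mulf_eq0 (gt_eqF hl3p) /= => /eqP; lia.
    have hd' : d' = - n by lia.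
    have n1 : n = 1.
      suff : ~ (1 < n) by lia. move=> hn2.
      case: (eqVneq (n + d) 0) => hu.
      + have hd : d = - n by lia.
        apply: (key (mkv (-1) (-1) (-1))) => //; first by rewrite mxE.
        apply: (conv2 _ (n%:~R^-1) 0 (@Ordinal 4 0 isT)) => //.
        * by rewrite invr_ge0 ltW.
        * by rewrite addr0 invr_le1 // ler1z; lia.
        apply/matrixP => i z; rewrite (ord1 z) /toQ /tet /= !mxE.
        case: i => [[|[|[|i]]] hi] //=; rewrite ?(hd, hd'); try change (k * l3) with n; rewrite ?(intrN, rmorph0, rmorph1); field; exact: nr0.
      + apply: (key (mkv 0 (-1) (-1))) => //; first by rewrite mxE.
        apply: (conv2 _ (n%:~R^-1) (- d%:~R / n%:~R) (@Ordinal 4 0 isT)) => //.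
        * by rewrite invr_ge0 ltW.
        * apply: divr_ge0; last exact: ltW. rewrite -intrN ler0z; lia.
        * have h : ((1 - d)%:~R : rat) <= n%:~R by rewrite ler_int; lia.
          rewrite intrB rmorph1 in h.
          rewrite (_ : _ + _ = (1 - d%:~R) / n%:~R); last by field.
          by rewrite ler_pdivrMr // mul1r.
        apply/matrixP => i z; rewrite (ord1 z) /toQ /tet /= !mxE.
        case: i => [[|[|[|i]]] hi] //=; rewrite ?hd'; try change (k * l3) with n; rewrite ?(intrN, rmorph0, rmorph1); field; exact: nr0.
    have h : 0 <= k * (l3 - 1) by apply: mulr_ge0; lia.
    have hk1 : k = 1 by move: n1; rewrite /n; lia.
    move: n1; rewrite /n hk1 mul1r => hl31; lia.
split => //.
have n1 : n = 1 by rewrite /n Hk1 Hl31 mulr1.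
rewrite n1 in B1 B2.
have hd : d = -1 by lia.
have hd' : d' = -1 by lia.
rewrite Hl31 Hl11 hd mul1r in I1.
rewrite Hl31 Hl21 hd' mul1r in I2.
have hc : c = l4 - 1 by lia.
have hc' : c' = l4 - 1 by lia.
have ex3 : x3 = mkv (l4 - 1) (l4 - 1) l4 by rewrite /x3 hc hc' Hk1 mul1r.
have ex4 : x4 = mkv (-1) (-1) (-1) by rewrite /x4 hd hd' Hk1 Hl31 mulr1.
rewrite ex3 ex4 in hlat *.
have l42 : l4 <= 2.
  rewrite leNgt; apply/negP => h3.
  have hr : ((l4 + 3)%:~R : rat) != 0 by rewrite intr_eq0; lia.
  have hr' : (l4%:~R + 3 : rat) != 0.
    have : (0:rat) <= l4%:~R by rewrite ler0z; lia.
    move=> h; rewrite gt_eqF //; lra.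
  have := hlat (mkv 1 1 1).
  have hcv : in_conv (tet x1 x2 (mkv (l4 - 1) (l4 - 1) l4) (mkv (-1) (-1) (-1))) (toQ (mkv 1 1 1)).
    apply: (@conv_pt _ (fun i : 'I_4 => match val i with
       | 0%N | 1%N | 2%N => 2 / (l4 + 3)%:~R
       | _ => (l4 - 3)%:~R / (l4 + 3)%:~R end)).
    - move=> [[|[|[|i]]] hi] /=.
      1-3: by apply: divr_ge0 => //; rewrite ler0z; lia.
      by apply: divr_ge0; rewrite ler0z; lia.
    - rewrite !big_ord_recl big_ord0 /=. rewrite ?(intrD, intrB, intrN, rmorph0, rmorph1). field; exact: hr'.
    move=> [[|[|[|j]]] hj]; rewrite !big_ord_recl big_ord0 /= /tet /= !mxE /=;
      rewrite ?(intrD, intrB, intrN, rmorph0, rmorph1); field; exact: hr'.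
  move/(_ hcv) => [p0|[i pi]].
    by move: (congr1 (fun M : vec3 => M 0 0) p0); rewrite !mxE.
  case: i pi => [[|[|[|[|i]]]] hi] //= pi.
  - by move: (congr1 (fun M : vec3 => M 1 0) pi); rewrite !mxE.
  - by move: (congr1 (fun M : vec3 => M 0 0) pi); rewrite !mxE.
  - move: (congr1 (fun M : vec3 => M 2 0) pi); rewrite !mxE /=; lia.
  - by move: (congr1 (fun M : vec3 => M 0 0) pi); rewrite !mxE.
have glid : forall V : 'I_4 -> vec3, GL3Z_equiv V V.
  move=> V; exists 1%:M; split; first by left; rewrite det1.
  by exists 1%g => i; rewrite mul1mx perm1.
have : l4 = 1 \/ l4 = 2 by lia.
case=> ->; [left|right]; exact: glid.
Qed.

Theorem proposition3p5 (l1 l2 l3 l4 a b k k' k'' : int) :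
  let x1 := mkv 1 0 0 in
  let x2 := mkv 0 1 0 in
  let x3 := mkv (k'' * l4 - a * l1) (k' * l4 - a * l2) (k * l4) in
  let x4 := mkv (- (k'' * l3) - b * l1) (- (k' * l3) - b * l2) (- (k * l3)) in
  fano (tet x1 x2 x3 x4) ->
  0 <= l1 -> l1 <= l2 -> l2 <= l3 -> l3 <= l4 ->
  gcdz (gcdz (gcdz l1 l2) l3) l4 = 1 ->
  l1 *: x1 + l2 *: x2 + l3 *: x3 + l4 *: x4 = 0 ->
  0 < a -> a * l3 + b * l4 = 1 ->
  0 <= k -> 0 <= k' -> 0 <= k'' ->
  0 <= k'' * l4 - a * l1 < k * l4 ->
  0 <= k' * l4 - a * l2 < k * l4 ->
  [/\ 0 <= k * l3 - k'' * l3 - b * l1 < k * l3,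
      0 <= k * l3 - k' * l3 - b * l2 < k * l3 &
      (k * l3 - k'' * l3 - b * l1 = 0 \/ k * l3 - k' * l3 - b * l2 = 0) ->
      l3 = 1 /\
      (GL3Z_equiv (tet x1 x2 x3 x4)
         (tet (mkv 1 0 0) (mkv 0 1 0) (mkv 0 0 1) (mkv (-1) (-1) (-1))) \/
       GL3Z_equiv (tet x1 x2 x3 x4)
         (tet (mkv 1 0 0) (mkv 0 1 0) (mkv 1 1 2) (mkv (-1) (-1) (-1))))].
Proof.
move=> x1 x2 x3 x4 hf hl1 hl12 hl23 hl34 _ _ ha hab hk hk' hk'' hc hc'.
have e1 : k * l3 - k'' * l3 - b * l1 = k * l3 + (- (k'' * l3) - b * l1) by ring.
have e2 : k * l3 - k' * l3 - b * l2 = k * l3 + (- (k' * l3) - b * l2) by ring.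
rewrite e1 e2.
exact: (@core l1 l2 l3 l4 a b k k' k'' _ _ _ _ hf erefl erefl erefl erefl
  hl1 hl12 hl23 hl34 hab hk hc hc').
Qed.
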